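(* Let $\epsilon>0$ and let $T$ be a tournament on $n$ vertices which is $\epsilon$-far from being transitive. Let $v_1,\ldots,v_n$ be an optimal ordering of $V(T)$ and let $B$ be the set of backwards edges in this ordering. Then at least one of the following holds: (1) the subset $B'\subseteq B$ consisting of the backwards edges of length at least $n/16$ satisfies $|B'|\ge |B|/4$; (2) $T$ contains a subtournament on at least $n/8$ vertices which is $2\epsilon$-far from being transitive.
   Context: Given an ordering $v_1,\ldots,v_n$ of the vertices of a tournament $T$, a backwards edge is an edge directed from $v_j$ to $v_i$ with $i<j$; its length is $j-i$. An ordering is optimal if it minimizes the number of backwards edges among all orderings of $V(T)$. An $m$-vertex tournament is $\delta$-far from being transitive if every ordering of its vertices has at least $\delta m^2$ backwards edges (equivalently, at least $\delta m^2$ edge directions must be switched in any ordering to make it transitive). *)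

(* Defs.v *)
From HB Require Import structures.
From mathcomp Require Import all_boot all_order all_algebra.
Set Implicit Arguments. Unset Strict Implicit. Unset Printing Implicit Defensive.
Import Order.TTheory GRing.Theory Num.Theory.

Definition is_tournament (V : finType) (E : rel V) : Prop :=
  (forall x, ~~ E x x) /\
  (forall x y, x != y -> (E x y || E y x) && ~~ (E x y && E y x)).

Definition is_ordering (V : finType) (S : {set V}) (s : seq V) : Prop :=
  uniq s /\ s =i S.

Definition backE (V : finType) (E : rel V) (s : seq V) : {set V * V} :=
  [set xy | [&& xy.1 \in s, xy.2 \in s, E xy.1 xy.2 & index xy.2 s < index xy.1 s]].

Definition blen (V : finType) (s : seq V) (xy : V * V) : nat :=
  index xy.1 s - index xy.2 s.

Definition optimal_ordering (V : finType) (E : rel V) (S : {set V}) (s : seq V) : Prop :=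
  is_ordering S s /\
  forall s', is_ordering S s' -> #|backE E s| <= #|backE E s'|.

Definition far_from_transitive (R : realFieldType) (V : finType) (E : rel V)
  (S : {set V}) (delta : R) : Prop :=
  forall s, is_ordering S s -> (delta * (#|S|%:R) ^+ 2 <= (#|backE E s|)%:R)%R.

(* Main.v *)
Require Import Defs.
From HB Require Import structures.
From mathcomp Require Import all_boot all_order all_algebra.
From mathcomp Require Import zify ring lra.
From Stdlib Require Import Classical.
Import Order.TTheory GRing.Theory Num.Theory.

Lemma idx_td (T : eqType) (s : seq T) l w x :
  x \in s -> l <= index x s < l + w ->
  x \in take w (drop l s) /\ index x (take w (drop l s)) = index x s - l.
Proof.
move=> xs /andP[h1 h2].
have ls : l <= size s by have := index_mem x s; rewrite xs; lia.
have E1 : index x s = l + index x (drop l s).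
  rewrite -{1}(cat_take_drop l s) index_cat in_take // size_take_min.
  by rewrite ltnNge h1 /=; lia.
have xd : x \in drop l s.
  by rewrite -index_mem size_drop; have := index_mem x s; rewrite xs; lia.
have xt : x \in take w (drop l s) by rewrite in_take //; lia.
split=> //.
rewrite E1 -{2}(cat_take_drop w (drop l s)) index_cat xt; lia.
Qed.

Lemma idx3 (T : eqType) (a m b : seq T) x :
  index x (a ++ m ++ b) =
  if x \in a then index x a else if x \in m then size a + index x m
  else size a + size m + index x b.
Proof. by rewrite !index_cat; case: (x \in a) => //; case: (x \in m) => //; lia. Qed.

Definition good n d w K := [&& 0 < d, 0 < K, n <= 8*w, w <= n, d + (n-1) %/ 16 <= w,
  n <= (K-1)*d + w & 8*K*(w*w) <= 3*(n*n)].

Definition fw n := (n + 7) %/ 8.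
Definition fd n := fw n - (n-1) %/ 16.
Definition fK n := 1 + (n - fw n + fd n - 1) %/ fd n.

Lemma small_ok : all (fun n => good n (fd n) (fw n) (fK n)) (iota 17 47).
Proof. by vm_compute. Qed.

Lemma params n : 17 <= n -> exists d w K, good n d w K.
Proof.
move=> h; case: (ltnP n 64) => h2.
  have : n \in iota 17 47 by rewrite mem_iota; lia.
  move/(allP small_ok) => g; by exists (fd n), (fw n), (fK n).
exists (n %/ 16).+2, (n %/ 16).*2.+2, 15.
set c := n %/ 16.
have hc : 16 * c <= n < 16 * c + 16 by rewrite /c; lia.
have c4 : 4 <= c by lia.
have h3 : 768 * (c*c) <= 3 * (n*n) by nia.
apply/and5P; split; try lia.
apply/and3P; split; try lia.
nia.
Qed.

Lemma pick_window n d w K p q : 0 < d -> 0 < K -> d + (n-1) %/ 16 <= w ->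
  n <= (K-1)*d + w -> w <= n -> p < q -> q < n -> 16 * (q - p) < n ->
  exists2 j, j < K & (minn (j * d) (n - w) <= p /\ q < minn (j * d) (n - w) + w).
Proof.
move=> d0 K0 dw nK wn pq qn sh.
case: (leqP (p %/ d) (K - 1)) => hj.
  exists (p %/ d); first lia.
  have e := divn_eq p d; have r := ltn_pmod p d0.
  set a := p %/ d * d in e *; split; lia.
exists (K - 1); first lia.
have e := divn_eq p d.
have : (K - 1) * d <= p %/ d * d by rewrite leq_mul2r; lia.
set a := p %/ d * d in e *; set b := (K - 1) * d in nK *; split; lia.
Qed.

Section Seg.
Set Implicit Arguments.
Unset Strict Implicit.
Variables (V : finType) (E : rel V).

Definition inm (m : seq V) : {set V * V} :=
  [set xy : V * V | (xy.1 \in m) && (xy.2 \in m)].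

Lemma disj (a m b : seq V) x : uniq (a ++ m ++ b) ->
  [/\ x \in a -> x \notin m, x \in a -> x \notin b & x \in m -> x \notin b].
Proof.
rewrite !cat_uniq => /and5P[_ /hasPn h1 _ /hasPn h2 _].
split=> xA; apply/negP=> xB.
- by have := h1 x; rewrite mem_cat xB => /(_ isT); rewrite xA.
- by have := h1 x; rewrite mem_cat xB orbT => /(_ isT); rewrite xA.
- by have := h2 x xB; rewrite xA.
Qed.

Lemma segI (a m b : seq V) : uniq (a ++ m ++ b) ->
  backE E (a ++ m ++ b) :&: inm m = backE E m.
Proof.
move=> u; apply/setP => -[x y]; rewrite !inE /= !mem_cat !idx3.
case xm: (x \in m); case ym: (y \in m); rewrite ?andbF ?andbT //=.
have [xa _ _] := disj x u; have [ya _ _] := disj y u.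
have xa' : (x \in a) = false by apply/negP => /xa; rewrite xm.
have ya' : (y \in a) = false by apply/negP => /ya; rewrite ym.
rewrite xa' ya' /= ltn_add2l.
  by [].
Qed.

Lemma segD (a m b t : seq V) : uniq (a ++ m ++ b) -> perm_eq m t ->
  backE E (a ++ m ++ b) :\: inm m = backE E (a ++ t ++ b) :\: inm m.
Proof.
move=> u pmt.
have u' : uniq (a ++ t ++ b) by rewrite -(perm_uniq (perm_cat (perm_refl a) (perm_cat pmt (perm_refl b)))).
have tm z : (z \in t) = (z \in m) by rewrite (perm_mem pmt).
have st : size t = size m by rewrite (perm_size pmt).
apply/setP => -[x y]; rewrite !inE /= !mem_cat !idx3 !tm st.
have [xam xab xmb] := disj x u; have [yam yab ymb] := disj y u.
have bxa : (index x a < @size V a) = (x \in a) := index_mem x a; have bya : (index y a < @size V a) = (y \in a) := index_mem y a.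
have bxm : (index x m < @size V m) = (x \in m) := index_mem x m; have bym : (index y m < @size V m) = (y \in m) := index_mem y m.
have bxt : (index x t < @size V t) = (x \in t) := index_mem x t; have byt : (index y t < @size V t) = (y \in t) := index_mem y t.
rewrite tm st in bxt byt.
case xa: (x \in a); case xm: (x \in m); case ya: (y \in a); case ym: (y \in m);
  rewrite ?andbF ?andbT ?orbT ?orbF //=;
  try (by move: (xam xa); rewrite xm); try (by move: (yam ya); rewrite ym);
  rewrite ?tm ?xa ?xm ?ya ?ym in bxa bya bxm bym bxt byt;
  case: (E x y) => //=; try case: (_ \in b) => //=; clear -bxa bya bxm bym bxt byt;
  repeat match goal with H : _ = false |- _ => clear H end;
  apply/idP/idP => ?; lia.
Qed.

Lemma seg (a m b t : seq V) : uniq (a ++ m ++ b) -> perm_eq m t ->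
  #|backE E (a ++ m ++ b)| + #|backE E t| = #|backE E (a ++ t ++ b)| + #|backE E m|.
Proof.
move=> u pmt.
have u' : uniq (a ++ t ++ b) by rewrite -(perm_uniq (perm_cat (perm_refl a) (perm_cat pmt (perm_refl b)))).
have Pe : inm m = inm t by apply/setP => -[x y]; rewrite !inE /= !(perm_mem pmt).
rewrite -(cardsID (inm m) (backE E (a ++ m ++ b))) -(cardsID (inm m) (backE E (a ++ t ++ b))).
rewrite (segD u pmt) (segI u) {2}Pe (segI u'); lia.
Qed.
End Seg.

Local Open Scope ring_scope.

Lemma card_bigcup_le (T : finType) K (F : 'I_K -> {set T}) :
  (#|\bigcup_(j < K) F j| <= \sum_(j < K) #|F j|)%N.
Proof.
elim: K F => [|K IH] F; first by rewrite !big_ord0 cards0.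
rewrite !big_ord_recr /=; apply: leq_trans (leq_card_setU _ _).1 _.
exact: leq_add (IH _) _.
Qed.

Lemma window (R : realFieldType) (V : finType) (E : rel V) (eps : R) (s : seq V) l w :
  uniq s -> s =i [set: V] ->
  (forall s', is_ordering [set: V] s' -> (#|backE E s| <= #|backE E s'|)%N) ->
  (l + w <= size s)%N ->
  ~ far_from_transitive E [set x in take w (drop l s)] (2 * eps) ->
  #|backE E (take w (drop l s))|%:R < 2 * eps * (w%:R) ^+ 2.
Proof.
move=> us sT opt lw nf.
set m := take w (drop l s).
have um : uniq m by rewrite /m take_uniq // drop_uniq.
have szm : size m = w by rewrite /m size_take size_drop; case: ltnP => //; lia.
have cW : #|[set x in m]| = w by rewrite cardsE -szm; apply/card_uniqP.
rewrite ltNge; apply/negP => big; apply: nf => t [ut tW].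
rewrite cW; apply: le_trans big _; rewrite ler_nat.
have pmt : perm_eq m t by apply: uniq_perm => // x; rewrite tW inE.
have es : s = take l s ++ m ++ drop w (drop l s) by rewrite /m !cat_take_drop.
have := @seg V E (take l s) m (drop w (drop l s)) t; rewrite -es => /(_ us pmt).
have pss : perm_eq s (take l s ++ t ++ drop w (drop l s)).
  by rewrite {1}es; apply: perm_cat => //; apply: perm_cat.
have := opt (take l s ++ t ++ drop w (drop l s)); rewrite /is_ordering.
rewrite -(perm_uniq pss) us => /(_ (conj isT _)) h.
have : (#|backE E s| <= #|backE E (take l s ++ t ++ drop w (drop l s))|)%N.
  by apply: h => x; rewrite -(perm_mem pss) sT.
lia.
Qed.

Theorem mainTheorem3 (R : realFieldType) (V : finType) (E : rel V) (eps : R)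
  (s : seq V) :
  0 < eps ->
  is_tournament E ->
  far_from_transitive E [set: V] eps ->
  optimal_ordering E [set: V] s ->
  (#|backE E s|%:R / 4 <=
     #|[set xy in backE E s | #|V|%:R / 16 <= (blen s xy)%:R :> R]|%:R :> R)
  \/
  (exists S : {set V}, #|V|%:R / 8 <= #|S|%:R :> R /\
     far_from_transitive E S (2 * eps)).
Proof.
move=> eps0 _ far [[us sT] opt].
have sz : size s = #|V|.
  by rewrite -(card_uniqP us) -cardsT; apply: eq_card => x; rewrite sT.
set n := #|V| in sz *.
set B := backE E s.
have Bfar : eps * n%:R ^+ 2 <= #|B|%:R by have := far s (conj us sT); rewrite cardsT.
set Lg := [set xy in B | _].
have bmem xy : xy \in B -> [/\ xy.1 \in s, xy.2 \in s, E xy.1 xy.2 & (index xy.2 s < index xy.1 s)%N].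
  by rewrite inE => /and4P.
case: (ltnP n 17) => hn.
  left; have -> : Lg = B.
    apply/setP => xy; rewrite inE; case hB: (xy \in B) => //=.
    have [_ _ _ lt] := bmem xy hB.
    have h1 : (1 <= blen s xy)%N by rewrite /blen; lia.
    apply: le_trans (_ : 1 <= _); last by rewrite ler1n.
    rewrite ler_pdivrMr // mul1r ler_nat; lia.
  have : 0 <= #|B|%:R :> R by [].
  lra.
case: (classic (exists S : {set V}, n%:R / 8 <= #|S|%:R :> R /\ far_from_transitive E S (2 * eps))) => [h|nh]; [by right|left].
have [d [w [K]]] := params n hn.
case/and5P => d0 K0 w8 wn /and3P[dw nK good].
pose l (j : nat) := minn (j * d) (n - w).
pose m (j : nat) := take w (drop (l j) s).
have wb j : #|backE E (m j)|%:R <= 2 * eps * (w%:R) ^+ 2.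
  apply: ltW; apply: (@window R V E eps s (l j) w us sT opt).
    rewrite sz /l; lia.
  move=> fw; apply: nh; exists [set x in m j]; split => //.
  have um : uniq (m j) by rewrite /m take_uniq // drop_uniq.
  have szm : size (m j) = w by rewrite /m size_take size_drop sz; case: ltnP => //; rewrite /l; lia.
  have -> : #|[set x in m j]| = w by rewrite cardsE -szm; apply/card_uniqP.
  rewrite ler_pdivrMr // -natrM ler_nat; lia.
set Sh := [set xy in B | ~~ (n%:R / 16 <= (blen s xy)%:R :> R)].
have hsplit : (#|Lg| + #|Sh| = #|B|)%N.
  rewrite /Lg /Sh !setIdE -(cardsID [set xy | n%:R / 16 <= (blen s xy)%:R :> R] B).
  congr (_ + _)%N; apply: eq_card => xy; rewrite !inE; exact: andbC.
have sub : Sh \subset \bigcup_(j < K) backE E (m j).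
  apply/subsetP => -[x y]; rewrite inE => /andP[hB hs].
  have [xs ys Exy lt] := bmem _ hB; rewrite /= in xs ys Exy lt.
  set p := index y s in lt *; set q := index x s in lt *.
  have qn : (q < n)%N by rewrite -sz index_mem.
  have short : (16 * (q - p) < n)%N.
    rewrite -(ltr_nat R) natrM; move: hs; rewrite /blen /= -/p -/q -ltNge.
    rewrite ltr_pdivlMr // => h; lra.
  have [j jK [lp ql]] := pick_window n d w K p q d0 K0 dw nK wn lt qn short.
  apply/bigcupP; exists (Ordinal jK) => //=.
  have hx : (l j <= q < l j + w)%N by move: lp ql; rewrite /l; lia.
  have hy : (l j <= p < l j + w)%N by move: lp ql; rewrite /l; lia.
  have [xm ix] := @idx_td _ s (l j) w x xs hx.
  have [ym iy] := @idx_td _ s (l j) w y ys hy.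
  rewrite inE /= -/(m j) in xm ym ix iy *.
  rewrite xm ym Exy ix iy /=; lia.
have shb : #|Sh|%:R <= (K%:R * (2 * eps * (w%:R) ^+ 2)) :> R.
  apply: le_trans (_ : (\sum_(j < K) #|backE E (m j)|)%:R <= _).
    by rewrite ler_nat; apply: leq_trans (subset_leq_card sub) (@card_bigcup_le _ _ _).
  rewrite natr_sum; apply: (@le_trans _ _ (\sum_(j < K) (2 * eps * w%:R ^+ 2))).
    by apply: ler_sum => j _; exact: wb.
  by rewrite sumr_const card_ord !mulr_natl.
have goodR : 8 * K%:R * (w%:R ^+ 2) <= 3 * n%:R ^+ 2 :> R.
  by move: good; rewrite -(ler_nat R) !natrM !expr2.
have e1 : #|B|%:R = #|Lg|%:R + #|Sh|%:R :> R by rewrite -natrD hsplit.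
rewrite e1.
have : eps * (8 * K%:R * (w%:R ^+ 2)) <= eps * (3 * n%:R ^+ 2) by rewrite ler_pM2l.
move: shb Bfar; rewrite e1; nra.
Qed.
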